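(* Let $A$ be a deterministic KAT automaton over $(\Sigma_0,T_0)$, let $\mathfrak{s}$ assign to each $p\in\Sigma_0$ a deterministic KAT automaton $\mathfrak{s}(p)$ over $(\Sigma_1,T_1)$, and let $\mathfrak{t}:T_0\to\mathsf{BA}(T_1)$. Then $L(\mathsf{compose}^{\mathfrak{s}}_{\mathfrak{t}}(A))=\mathrm{apply}^{\mathfrak{s}'}_{\mathfrak{t}}(L(A))$, where $\mathfrak{s}'(p)=L(\mathfrak{s}(p))$.
   Context: Atoms $\mathsf{At}_T=2^T$; $\mathsf{BA}(T)$ Boolean expressions over $T$; $\alpha\le b$ means $b$ holds under the assignment making exactly the tests in $\alpha$ true. Guarded strings: words in $\mathsf{At}_T(\Sigma\mathsf{At}_T)^*$; $w'\alpha\diamond\alpha x'=w'\alpha x'$. Deterministic KAT automaton over $(\Sigma,T)$: $A=(Q,\delta,\iota)$, $Q$ finite, $\delta:Q\times\mathsf{At}_T\to\{\mathsf{accept},\mathsf{reject}\}+\Sigma\times Q$, $\iota:\mathsf{At}_T\to\{\mathsf{accept},\mathsf{reject}\}+\Sigma\times Q$. $L_A(\gamma)$ is the smallest set with $\gamma(\alpha)=\mathsf{accept}\Rightarrow\alpha\in L_A(\gamma)$ and $\gamma(\alpha)=(p,q)$, $w\in L_A(\delta(q,-))\Rightarrow\alpha pw\in L_A(\gamma)$; $L(A)=L_A(\iota)$. Language substitution: $\beta\in\mathsf{At}_{T_1}$ is $\mathfrak{t}$-consistent with $\alpha\in\mathsf{At}_{T_0}$ if $\alpha\le t\iff\beta\le\mathfrak{t}(t)$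 for all $t\in T_0$; $\mathrm{apply}_{\mathfrak{t}}(L)=\{\beta_0p_0\cdots p_{n-1}\beta_n:\exists\alpha_0p_0\cdots p_{n-1}\alpha_n\in L$ with each $\beta_i$ $\mathfrak{t}$-consistent with $\alpha_i\}$; for $L$ over $(\Sigma_0,T_1)$ and $\mathfrak{s}'$ mapping $\Sigma_0$ to guarded languages over $(\Sigma_1,T_1)$, $\mathrm{apply}^{\mathfrak{s}'}(L)=\{\alpha_0\diamond w_0\diamond\alpha_1\diamond\cdots\diamond w_{n-1}\diamond\alpha_n:\alpha_0p_0\cdots p_{n-1}\alpha_n\in L,\ w_i\in\mathfrak{s}'(p_i)\}$; $\mathrm{apply}^{\mathfrak{s}'}_{\mathfrak{t}}=\mathrm{apply}^{\mathfrak{s}'}\circ\mathrm{apply}_{\mathfrak{t}}$. Automata composition. (1) $\mathsf{compose}_{\mathfrak{t}}(A)$ for $A=(Q,\delta,\iota)$ over $(\Sigma,T_0)$: with $\mathfrak{t}^{-1}(\beta)\in\mathsf{At}_{T_0}$ the atom such that $t\in\mathfrak{t}^{-1}(\beta)$ iff $\beta\le\mathfrak{t}(t)$, it is $(Q,\delta',\iota')$ over $(\Sigma,T_1)$ with $\delta'(q,\beta)=\delta(q,\mathfrak{t}^{-1}(\beta))$, $\iota'(\beta)=\iota(\mathfrak{t}^{-1}(\beta))$. (2) For $A=(Q,\delta,\iota)$ over $(\Sigma_0,T)$ and $\mathfrak{s}(p)=(Q_p,\delta_p,\iota_p)$ over $(\Sigma_1,T)$: $\hat\delta(q,\alpha)=\mathsf{accept}$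 if $\delta(q,\alpha)=\mathsf{accept}$; $=(p,q')$ if $\delta(q,\alpha)=(p,q')$ and $\iota_p(\alpha)\ne\mathsf{accept}$; $=\hat\delta(q',\alpha)$ if $\delta(q,\alpha)=(p,q')$ and $\iota_p(\alpha)=\mathsf{accept}$; $=\mathsf{reject}$ otherwise (including when the recursion does not terminate). $\hat\iota(\alpha)=\hat\delta(q,\alpha)$ if $\iota(\alpha)=(p,q)$ and $\iota_p(\alpha)=\mathsf{accept}$, else $\iota(\alpha)$. $\mathsf{compose}^{\mathfrak{s}}(A)=(Q',\delta',\iota')$ over $(\Sigma_1,T)$ with $Q'=\sum_{p\in\Sigma_0}Q_p\times Q$ and, for $q_p\in Q_p$, $q\in Q$: $\delta'((q_p,q),\alpha)=(p'',(q_p',q))$ if $\delta_p(q_p,\alpha)=(p'',q_p')$; $=(p'',(q_{p'},q'))$ if $\delta_p(q_p,\alpha)=\mathsf{accept}$, $\hat\delta(q,\alpha)=(p',q')$ and $\iota_{p'}(\alpha)=(p'',q_{p'})$; $=\mathsf{accept}$ if $\delta_p(q_p,\alpha)=\mathsf{accept}$ and $\hat\delta(q,\alpha)=\mathsf{accept}$; $=\mathsf{reject}$ otherwise; $\iota'(\alpha)=\mathsf{accept}$ if $\hat\iota(\alpha)=\mathsf{accept}$; $=(p'',(q_{p'},q))$ if $\hat\iota(\alpha)=(p',q)$ and $\iota_{p'}(\alpha)=(p'',q_{p'})$; $=\mathsf{reject}$ otherwise. (3) $\mathsf{compose}^{\mathfrak{s}}_{\mathfrak{t}}(A)=\mathsf{compose}^{\mathfrak{s}}(\mathsf{compose}_{\mathfrak{t}}(A))$.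 *)

(* Defs.v *)
From HB Require Import structures.
From mathcomp Require Import all_boot.
Set Implicit Arguments. Unset Strict Implicit. Unset Printing Implicit Defensive.

(* Atoms over a finite set of tests T: subsets of T (the tests that are true). *)
Definition atom (T : finType) := {set T}.

Inductive BA (T : Type) : Type :=
| BTest of T | BZero | BOne
| BAnd of BA T & BA T | BOr of BA T & BA T | BNot of BA T.

Fixpoint ba_eval (T : finType) (a : atom T) (b : BA T) : bool :=
  match b with
  | BTest t => t \in a
  | BZero => false | BOne => true
  | BAnd b1 b2 => ba_eval a b1 && ba_eval a b2
  | BOr b1 b2 => ba_eval a b1 || ba_eval a b2
  | BNot b1 => ~~ ba_eval a b1
  end.

(* Guarded strings alpha_0 p_0 alpha_1 ... p_{n-1} alpha_n, stored as
   (alpha_0, [:: (p_0, alpha_1); ...; (p_{n-1}, alpha_n)]). *)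
Definition gstring (S T : finType) := (atom T * seq (S * atom T))%type.
Definition lang (S T : finType) := gstring S T -> Prop.

Definition gs_last (S T : finType) (w : gstring S T) : atom T := last w.1 (map snd w.2).

Definition diamond (S T : finType) (u v : gstring S T) : option (gstring S T) :=
  if gs_last u == v.1 then Some (u.1, u.2 ++ v.2) else None.

Inductive res (S Q : Type) : Type := Acc | Rej | Act of S & Q.
Arguments Acc {S Q}. Arguments Rej {S Q}.

Record kat_aut (S T : finType) := KatAut {
  st : finType;
  delta : st -> atom T -> res S st;
  iota : atom T -> res S st }.
Arguments delta {S T} k _ _.
Arguments iota {S T} k _.

Inductive lang_from (S T : finType) (A : kat_aut S T) :
  (atom T -> res S (st A)) -> gstring S T -> Prop :=
| LF_acc gamma a : gamma a = Acc -> lang_from gamma (a, [::])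
| LF_act gamma a p q w :
    gamma a = Act p q -> lang_from (delta A q) w ->
    lang_from gamma (a, (p, w.1) :: w.2).

Arguments lang_from {S T} A _ _.
Definition L (S T : finType) (A : kat_aut S T) : lang S T := lang_from A (iota A).

Definition t_consistent (T0 T1 : finType) (t : T0 -> BA T1) (b : atom T1) (a : atom T0) : Prop :=
  forall x : T0, (x \in a) = ba_eval b (t x).

Fixpoint cons_list (S T0 T1 : finType) (t : T0 -> BA T1)
  (ws : seq (S * atom T1)) (vs : seq (S * atom T0)) : Prop :=
  match ws, vs with
  | [::], [::] => True
  | (p, b) :: ws', (q, a) :: vs' => p = q /\ t_consistent t b a /\ cons_list t ws' vs'
  | _, _ => False
  end.

Definition apply_t (S T0 T1 : finType) (t : T0 -> BA T1) (L0 : lang S T0) : lang S T1 :=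
  fun w => exists v, L0 v /\ t_consistent t w.1 v.1 /\ cons_list t w.2 v.2.

(* subst s' v x : x = alpha_0 <> w_0 <> alpha_1 <> ... <> w_{n-1} <> alpha_n
   for v = alpha_0 p_0 ... alpha_n and some w_i in s'(p_i) (right-nested). *)
Inductive subst (S0 S1 T : finType) (s' : S0 -> lang S1 T) :
  gstring S0 T -> gstring S1 T -> Prop :=
| Sub_nil a : subst s' (a, [::]) (a, [::])
| Sub_cons a p b rest w r y x :
    s' p w -> subst s' (b, rest) r ->
    diamond w r = Some y -> diamond (a, [::]) y = Some x ->
    subst s' (a, (p, b) :: rest) x.

Arguments subst {S0 S1 T} s' _ _.
Definition apply_s (S0 S1 T : finType) (s' : S0 -> lang S1 T) (L0 : lang S0 T) : lang S1 T :=
  fun x => exists v, L0 v /\ subst s' v x.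

Definition apply_st (S0 S1 T0 T1 : finType) (s' : S0 -> lang S1 T1) (t : T0 -> BA T1)
  (L0 : lang S0 T0) : lang S1 T1 := apply_s s' (apply_t t L0).

Definition t_inv (T0 T1 : finType) (t : T0 -> BA T1) (b : atom T1) : atom T0 :=
  [set x | ba_eval b (t x)].

Definition compose_t (S T0 T1 : finType) (t : T0 -> BA T1) (A : kat_aut S T0) : kat_aut S T1 :=
  @KatAut S T1 (st A) (fun q b => delta A q (t_inv t b)) (fun b => iota A (t_inv t b)).

Section ComposeS.
Variables (S0 S1 T : finType) (s : S0 -> kat_aut S1 T) (A : kat_aut S0 T).

(* hat-delta, computed with fuel: a non-terminating recursion gives reject.
   Along the deterministic recursion, a terminating one visits pairwise distinct
   states, so fuel #|st A| computes exactly the recursive definition. *)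
Fixpoint hat_delta_fuel (n : nat) (q : st A) (a : atom T) : res S0 (st A) :=
  match n with
  | 0 => Rej
  | n'.+1 =>
    match delta A q a with
    | Acc => Acc
    | Rej => Rej
    | Act p q' =>
      match iota (s p) a with
      | Acc => hat_delta_fuel n' q' a
      | _ => Act p q'
      end
    end
  end.

Definition hat_delta (q : st A) (a : atom T) := hat_delta_fuel #|st A| q a.

Definition hat_iota (a : atom T) : res S0 (st A) :=
  match iota A a with
  | Act p q => match iota (s p) a with Acc => hat_delta q a | _ => iota A a end
  | r => r
  end.

Definition cstate : finType := ({p : S0 & st (s p)} * st A)%type.

Definition enter (a : atom T) (r : res S0 (st A)) : res S1 cstate :=
  match r with
  | Acc => Acc
  | Act p' q' =>
    match iota (s p') a with
    | Act p'' qp => Act p'' (Tagged (fun p => st (s p)) qp, q')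
    | _ => Rej
    end
  | Rej => Rej
  end.

Definition cdelta (x : cstate) (a : atom T) : res S1 cstate :=
  let: (existT p qp, q) := x in
  match delta (s p) qp a with
  | Act p'' qp' => Act p'' (Tagged (fun p => st (s p)) qp', q)
  | Acc => enter a (hat_delta q a)
  | Rej => Rej
  end.

Definition ciota (a : atom T) : res S1 cstate := enter a (hat_iota a).

Definition compose_s : kat_aut S1 T := @KatAut S1 T cstate cdelta ciota.
End ComposeS.

Definition compose_st (S0 S1 T0 T1 : finType) (s : S0 -> kat_aut S1 T1)
  (t : T0 -> BA T1) (A : kat_aut S0 T0) : kat_aut S1 T1 :=
  compose_s s (compose_t t A).

(* Main.v *)
Require Import Defs.
From mathcomp Require Import all_boot zify.
Set Implicit Arguments. Unset Strict Implicit. Unset Printing Implicit Defensive.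

Section Gen.
Variables (S T : finType) (A : kat_aut S T).

Lemma lang_inv g x : lang_from A g x ->
  (g x.1 = Acc /\ x.2 = [::]) \/
  (exists p q w, g x.1 = Act p q /\ lang_from A (delta A q) w /\ x.2 = (p, w.1) :: w.2).
Proof.
case=> [g0 a H | g0 a p q w H Hw] /=; [left | right; exists p, q, w]; by [].
Qed.

Lemma lang_ext g g' x : lang_from A g x -> g' x.1 = g x.1 -> lang_from A g' x.
Proof.
case=> [g0 a H | g0 a p q w H Hw] /= E; [apply: LF_acc | apply: LF_act Hw]; by rewrite E.
Qed.

Lemma lang_acc g x : lang_from A g x -> g x.1 = Acc -> x.2 = [::].
Proof. by case/lang_inv => [[]|[p [q [w [-> _]]]]]. Qed.
End Gen.

Section Subst.
Variables (S0 S1 T : finType) (s' : S0 -> lang S1 T).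

Lemma diamondP (u v y : gstring S1 T) :
  diamond u v = Some y -> gs_last u = v.1 /\ y = (u.1, u.2 ++ v.2).
Proof. rewrite /diamond; case: eqP => // E [<-]; by []. Qed.

Lemma subst_inv v x : subst s' v x ->
  (v.2 = [::] /\ x = (v.1, [::])) \/
  (exists p b rest w r, v.2 = (p, b) :: rest /\ s' p w /\ subst s' (b, rest) r /\
     w.1 = v.1 /\ gs_last w = r.1 /\ x = (v.1, w.2 ++ r.2)).
Proof.
case=> [a | a p b rest w r y x0 Hw Hr /diamondP [E1 ->] /diamondP [E2 ->]];
  [by left | right].
exists p, b, rest, w, r; do 5 split => //.
Qed.

Lemma subst_first v x : subst s' v x -> x.1 = v.1.
Proof. by case/subst_inv => [[_ ->]|[p [b [rest [w [r [_ [_ [_ [_ [_ ->]]]]]]]]]]]. Qed.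

Lemma subst_build a p b rest w r : s' p w -> subst s' (b, rest) r -> w.1 = a ->
  gs_last w = r.1 -> subst s' (a, (p, b) :: rest) (a, w.2 ++ r.2).
Proof.
move=> Hw Hr E1 E2.
apply: (@Sub_cons _ _ _ s' a p b rest w r (a, w.2 ++ r.2)) => //.
  by rewrite /diamond E2 eqxx E1.
by rewrite /diamond /gs_last /= eqxx.
Qed.
End Subst.
Section Comp.
Variables (S0 S1 T : finType) (s : S0 -> kat_aut S1 T) (B : kat_aut S0 T).
Local Notation fuel := (@hat_delta_fuel S0 S1 T s B).

Inductive hatR (a : atom T) : (atom T -> res S0 (st B)) -> res S0 (st B) -> Prop :=
| HR_acc g : g a = Acc -> hatR a g Acc
| HR_act g p q : g a = Act p q -> Defs.iota (s p) a <> Acc -> hatR a g (Act p q)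
| HR_skip g p q r : g a = Act p q -> Defs.iota (s p) a = Acc -> hatR a (delta B q) r -> hatR a g r.

Definition noskip (r : res S0 (st B)) a := forall p q, r = Act p q -> Defs.iota (s p) a <> Acc.

Lemma hatR_ns a g r : hatR a g r -> r <> Rej /\ noskip r a.
Proof.
elim=> [g0 _|g0 p q _ H|g0 p q r0 _ _ _ //]; split=> //.
by move=> p' q' [<- _].
Qed.

Lemma F1 a n q r : fuel n q a = r -> r <> Rej -> hatR a (delta B q) r.
Proof.
elim: n q r => [|n IH] q r /=; first by move=> <-.
case E: (delta B q a) => [||p q'] ; first by move=> <- _; apply: HR_acc.
  by move=> <-.
case E2: (Defs.iota (s p) a) => [||p2 qp] Hr Hn.
- exact: HR_skip E E2 (IH _ _ Hr Hn).
- by rewrite -Hr; apply: HR_act E _; rewrite E2.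
- by rewrite -Hr; apply: HR_act E _; rewrite E2.
Qed.

Lemma F2 a g r : hatR a g r -> forall q, g a = delta B q a -> exists n, fuel n q a = r.
Proof.
elim=> [g0 Hg|g0 p q Hg Hi|g0 p q r0 Hg Hi _ IH] q0 E.
- by exists 1; rewrite /= -E Hg.
- by exists 1; rewrite /= -E Hg; case: (Defs.iota (s p) a) Hi.
- have [n Hn] := IH q erefl.
  by exists n.+1; rewrite /= -E Hg Hi.
Qed.

Lemma mono a n k q : fuel n q a <> Rej -> fuel (n + k) q a = fuel n q a.
Proof.
elim: n q => [|n IH] q //=.
case: (delta B q a) => [||p q'] //.
by case: (Defs.iota (s p) a) => // H; apply: IH.
Qed.

Definition nxt a q := match delta B q a with
  | Act p q' => match Defs.iota (s p) a with Acc => q' | _ => q end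
  | _ => q end.

Lemma iter_fix (f : st B -> st B) k q : f q = q -> iter k f q = q.
Proof. by move=> H; elim: k => //= k ->. Qed.

Lemma shift a k m q : fuel (k + m.+1) q a = fuel m.+1 (iter k (nxt a) q) a.
Proof.
elim: k q => [|k IH] q //.
rewrite iterSr addSn /=.
rewrite {2}/nxt.
case E: (delta B q a) => [||p q'].
- by rewrite iter_fix /= ?E // /nxt E.
- by rewrite iter_fix /= ?E // /nxt E.
case E2: (Defs.iota (s p) a) => [||p2 qp].
- exact: IH.
- by rewrite iter_fix /= ?E ?E2 // /nxt E E2.
- by rewrite iter_fix /= ?E ?E2 // /nxt E E2.
Qed.

Lemma pigeon a q : exists i j, i < j <= #|st B| /\ iter i (nxt a) q = iter j (nxt a) q.
Proof.
pose f (i : 'I_(#|st B|.+1)) := iter i (nxt a) q.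
case: (boolP [exists i : 'I_#|st B|.+1, exists j : 'I_#|st B|.+1, (i < j) && (f i == f j)]).
  case/existsP => i /existsP [j /andP [Hij /eqP E]].
  exists i, j; split => //; rewrite Hij /=; rewrite -ltnS; exact: ltn_ord.
move=> Hn; have Hinj : injective f.
  move=> i j E; apply/val_inj => /=.
  case: (ltngtP i j) => // H; case/negP: Hn.
  - by apply/existsP; exists i; apply/existsP; exists j; rewrite H E eqxx.
  - by apply/existsP; exists j; apply/existsP; exists i; rewrite H E eqxx.
by have := @leq_card _ _ f Hinj; rewrite card_ord ltnn.
Qed.

Lemma stab a q n : fuel n q a <> Rej -> hat_delta s q a = fuel n q a.
Proof.
rewrite /hat_delta.
have [i [j [/andP [Hij Hj] Eij]]] := pigeon a q.
elim: n {-2}n (leqnn n) => [|N IH] n Hn Hr.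
  by move: Hr; rewrite leqn0 in Hn; rewrite (eqP Hn).
case: (leqP n #|st B|) => Hle.
  by rewrite -(subnKC Hle) mono.
have Hn' : n = j + (n - j - 1).+1.
  lia.
have E : fuel n q a = fuel (i + (n - j - 1).+1) q a.
  by rewrite {1}Hn' !shift Eij.
rewrite E; apply: IH.
  lia.
by rewrite -E.
Qed.
Local Notation C := (compose_s s B).
Local Notation sp := (fun p => L (s p)).

Definition K (g : atom T -> res S0 (st B)) (x : gstring S1 T) :=
  exists v, lang_from B g v /\ subst sp v x.

Lemma K_const g x : K g x <-> K (fun _ => g x.1) x.
Proof.
split=> -[v [Hv Hs]]; exists v; split => //; apply: (lang_ext Hv);
  by rewrite (subst_first Hs).
Qed.

Lemma K_skip g a p q x : g a = Act p q -> Defs.iota (s p) a = Acc -> x.1 = a ->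
  (K g x <-> K (delta B q) x).
Proof.
move=> Hg Hi Ex; split=> -[v [Hv Hs]].
- have Ev : v.1 = a by rewrite -(subst_first Hs).
  case/lang_inv: Hv => [[Hg' _]| [p1 [q1 [w [Hg' [Hw E2]]]]]].
    by move: Hg'; rewrite Ev Hg.
  move: Hg'; rewrite Ev Hg => -[Ep1 Eq1]; subst p1 q1.
  case/subst_inv: Hs => [[E _] | [p2 [b [rest [u [r [E3 [Hu [Hr [Eu1 [Elast Ex']]]]]]]]]]].
    by rewrite E in E2.
  move: E3; rewrite E2 => -[Ep Eb Er]; subst p2 b rest.
  have Hu2 : u.2 = [::] by apply: (lang_acc Hu); rewrite Eu1 Ev.
  exists w; split => //.
  have -> : x = r.
    move: Elast; rewrite /gs_last Hu2 /= Eu1 Ev => Er1.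
    by rewrite Ex' Hu2 /= Ev Er1; case: (r) {Hr Er1}.
  by case: (w) Hr.
- have Ev : v.1 = a by rewrite -(subst_first Hs).
  exists (a, (p, v.1) :: v.2); split; first exact: LF_act Hg Hv.
  have -> : x = (a, [::] ++ x.2) by rewrite -Ex; case: x {Hs Ex}.
  apply: (subst_build (w := (a, [::])) (r := x)) => //.
  + by apply: LF_acc.
  + by case: (v) Hs.
Qed.

Lemma hatR_K a g r : hatR a g r -> forall x, x.1 = a -> (K g x <-> K (fun _ => r) x).
Proof.
elim=> [g0 Hg|g0 p q Hg Hi|g0 p q r0 Hg Hi _ IH] x Ex.
- by rewrite K_const Ex Hg.
- by rewrite K_const Ex Hg.
- by rewrite (K_skip Hg Hi Ex); apply: IH.
Qed.

Lemma K_hatR g x : K g x -> exists r, hatR x.1 g r.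
Proof.
case=> v [Hv Hs]; rewrite (subst_first Hs).
elim: Hv x Hs => [g0 a Hg | g0 a p q w Hg Hw IH] x Hs.
  by exists Acc; apply: HR_acc.
case E: (Defs.iota (s p) a) => [||p2 qp]; last 2 first.
- by exists (Act p q); apply: HR_act => //; rewrite E.
- by exists (Act p q); apply: HR_act => //; rewrite E.
case/subst_inv: Hs => [[E' _] | [p2 [b [rest [u [r [E3 [Hu [Hr [Eu1 [Elast Ex']]]]]]]]]]] //.
case: E3 => Ep Eb Er; subst p2 b rest.
have Hu2 : u.2 = [::] by apply: (lang_acc Hu); rewrite Eu1.
have Hr' : subst sp w r by case: (w) Hr.
have [r0 Hr0] := IH r Hr'.
have Ew : w.1 = a.
  by rewrite -(subst_first Hr') -Elast /gs_last Hu2 /= Eu1.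
by exists r0; apply: HR_skip Hg E _; rewrite -Ew.
Qed.

Lemma enter_acc a (r : res S0 (st B)) : enter s a r = Acc -> r = Acc.
Proof. by case: r => // p q /=; case: (Defs.iota (s p) a). Qed.

Lemma enter_rej a (r : res S0 (st B)) : enter s a r <> Rej -> r <> Rej.
Proof. by case: r. Qed.

Lemma enter_act a (r : res S0 (st B)) p'' c : enter s a r = Act p'' c ->
  exists p q qp, r = Act p q /\ Defs.iota (s p) a = Act p'' qp /\
    c = (Tagged (fun p => st (s p)) qp, q).
Proof.
case: r => // p q /=; case E: (Defs.iota (s p) a) => [||p2 qp] // [<- <-].
by exists p, q, qp.
Qed.

Lemma hd_hatR q a r : hat_delta s q a = r -> r <> Rej -> hatR a (delta B q) r.
Proof. exact: F1. Qed.

Lemma hatR_hd q a r : hatR a (delta B q) r -> hat_delta s q a = r.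
Proof.
move=> H; have [n Hn] := F2 H erefl.
have [Hr _] := hatR_ns H.
by rewrite (stab (n := n)) // Hn.
Qed.

Lemma hi_hatR a r : hat_iota s B a = r -> r <> Rej -> hatR a (Defs.iota B) r.
Proof.
rewrite /hat_iota; case E: (Defs.iota B a) => [||p q].
- by move=> <- _; apply: HR_acc.
- by move=> <-.
case E2: (Defs.iota (s p) a) => [||p2 qp] Hr Hn.
- by apply: HR_skip E E2 _; apply: hd_hatR Hr Hn.
- by rewrite -Hr; apply: HR_act E _; rewrite E2.
- by rewrite -Hr; apply: HR_act E _; rewrite E2.
Qed.

Lemma hatR_hi a r : hatR a (Defs.iota B) r -> hat_iota s B a = r.
Proof.
rewrite /hat_iota.
move Eg: (Defs.iota B) => g H; case: H Eg => [g0 Hg|g0 p q Hg Hi|g0 p q r0 Hg Hi H] E.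
- by rewrite Hg.
- by rewrite Hg; case: (Defs.iota (s p) a) Hi.
- by rewrite Hg Hi; apply: hatR_hd.
Qed.
Local Notation cd p qp q := (@cdelta S0 S1 T s B (@existT _ (fun i => st (s i)) p qp, q)).

Definition Mid p (qp : st (s p)) (q : st B) (x : gstring S1 T) :=
  exists u z, lang_from (s p) (delta (s p) qp) u /\ K (delta B q) z /\
    gs_last u = z.1 /\ x = (u.1, u.2 ++ z.2).
Arguments Mid : clear implicits.

Lemma gs_last_cons (a : atom T) p (u : gstring S1 T) :
  gs_last (a, (p, u.1) :: u.2) = gs_last u.
Proof. by rewrite /gs_last. Qed.

Lemma sound g x : lang_from C g x ->
  (forall r, noskip r x.1 -> g x.1 = enter s x.1 r -> K (fun _ => r) x) /\
  (forall p qp q, g x.1 = cd p qp q x.1 -> Mid p qp q x).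
Proof.
elim=> {g x} [g a Hg | g a p'' c w Hg Hw [IH1 IH2]] /=.
  split.
    move=> r _; rewrite Hg => /esym/enter_acc ->.
    exists (a, [::]); split; [exact: LF_acc | exact: Sub_nil].
  move=> p qp q; rewrite Hg /cdelta /=; case E: (delta (s p) qp a) => [||p2 qp2] //.
  move=> /esym/enter_acc Hh.
  have HR := hd_hatR Hh (ltac:(by [])).
  exists (a, [::]), (a, [::]); split; first exact: LF_acc.
  split; last by [].
  apply: (proj2 (hatR_K HR (x := (a, [::])) erefl)).
  exists (a, [::]); split; [exact: LF_acc | exact: Sub_nil].
have C1 : forall r, noskip r a -> g a = enter s a r -> K (fun _ => r) (a, (p'', w.1) :: w.2).
  move=> r ns; rewrite Hg => /esym/enter_act [p1 [q1 [qp [Er [Ei Ec]]]]]; subst r c.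
  have [u [z [Hu [[v0 [Hv0 Hs0]] [El Ew]]]]] := IH2 p1 qp q1 erefl.
  exists (a, (p1, v0.1) :: v0.2); split.
    exact: (LF_act (gamma := fun _ => Act p1 q1) (a := a) erefl Hv0).
  rewrite Ew.
  have -> : (p'', u.1) :: u.2 ++ z.2 = ((p'', u.1) :: u.2) ++ z.2 by [].
  apply: (subst_build (w := (a, (p'', u.1) :: u.2)) (r := z)) => //.
  + exact: LF_act Ei Hu.
  + by case: (v0) Hs0.
split => //.
move=> p qp q; rewrite Hg /cdelta /=; case E: (delta (s p) qp a) => [||p2 qp2] //.
  move=> Hh.
  have Hr : hat_delta s q a <> Rej by apply: (@enter_rej a); rewrite -Hh.
  have HR := hd_hatR (erefl _) Hr.
  have [_ ns] := hatR_ns HR.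
  have Kx := C1 _ ns (etrans Hg Hh).
  exists (a, [::]), (a, (p'', w.1) :: w.2); split; first exact: LF_acc E.
  split; last by [].
  exact: (proj2 (hatR_K HR (x := (a, (p'', w.1) :: w.2)) erefl) Kx).
move=> [Ep Ec]; subst p2 c.
have [u [z [Hu [Hz [El Ew]]]]] := IH2 p qp2 q erefl.
exists (a, (p'', u.1) :: u.2), z; split; first exact: LF_act E Hu.
split => //; split; first by rewrite -El /gs_last.
by rewrite Ew.
Qed.

Lemma complete n : forall x, size x.2 < n ->
  (forall r g, noskip r x.1 -> g x.1 = enter s x.1 r -> K (fun _ => r) x -> lang_from C g x) /\
  (forall p qp q g, g x.1 = cd p qp q x.1 -> Mid p qp q x -> lang_from C g x).
Proof.
elim: n => [|n IH] [a xs] //= Hsz.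
have Q1 : forall r g, noskip r a -> g a = enter s a r -> K (fun _ => r) (a, xs) ->
    lang_from C g (a, xs).
  move=> r g ns Hg [v [Hv Hs]]; have /= Ev := subst_first Hs.
  case/lang_inv: Hv => [[/= Hr Hv2]|[p [q [w [/= Hr [Hw Hv2]]]]]]; subst r.
    case/subst_inv: Hs => [[_ [_ ->]]|[p2 [b [rest [u [z [E3 _]]]]]]]; last by rewrite Hv2 in E3.
    by apply: LF_acc; rewrite Hg.
  case/subst_inv: Hs => [[E _]|[p2 [b [rest [u [z [E3 [Hu [Hz [Eu1 [El Ex]]]]]]]]]]].
    by rewrite Hv2 in E.
  move: E3; rewrite Hv2 => -[Ep Eb Er]; subst p2 b rest.
  case: Ex => _ Exs; subst xs.
  case/lang_inv: Hu => [[Hi _]|[p3 [qp [u' [Hi [Hu' Hu2]]]]]].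
    by move: Hi; rewrite Eu1 -Ev => /(ns p q erefl).
  rewrite Hu2 /=.
  move: Hi; rewrite Eu1 -Ev => Hi.
  have Hg' : g a = Act p3 (Tagged (fun i => st (s i)) qp, q) by rewrite Hg /= Hi.
  apply: (@LF_act _ _ C g a p3 (Tagged (fun i => st (s i)) qp, q) (u'.1, u'.2 ++ z.2) Hg').
  have Hsz' : size (u'.2 ++ z.2) < n by move: Hsz; rewrite Hu2 /= ltnS.
  have [_ IH2] := IH (u'.1, u'.2 ++ z.2) Hsz'.
  apply: (IH2 p qp q) => //.
  exists u', z; split => //; split; first by exists w; split => //; case: (w) Hz.
  by split => //; rewrite -El /gs_last Hu2.
split => //.
move=> p qp q g Hg [u [z [Hu [Hz [El Ex]]]]].
case: Ex => Ea Exs; subst xs a.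
case/lang_inv: Hu => [[Hd Hu2]|[p2 [qp2 [u' [Hd [Hu' Hu2]]]]]].
  have Ez1 : z.1 = u.1 by rewrite -El /gs_last Hu2.
  have [r HR] := K_hatR Hz; rewrite Ez1 in HR.
  have [Hr ns] := hatR_ns HR.
  apply: (Q1 r) => //.
    by rewrite Hg /cdelta /= Hd (hatR_hd HR).
  rewrite Hu2 /=.
  have -> : (u.1, z.2) = z by rewrite -Ez1; case: (z).
  exact: (proj1 (hatR_K HR Ez1) Hz).
rewrite Hu2 /=.
have Hg' : g u.1 = Act p2 (Tagged (fun i => st (s i)) qp2, q) by rewrite Hg /cdelta /= Hd.
apply: (@LF_act _ _ C g u.1 p2 (Tagged (fun i => st (s i)) qp2, q) (u'.1, u'.2 ++ z.2) Hg').
have Hsz' : size (u'.2 ++ z.2) < n by move: Hsz; rewrite Hu2 /= ltnS.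
have [_ IH2] := IH (u'.1, u'.2 ++ z.2) Hsz'.
apply: (IH2 p qp2 q) => //.
exists u', z; split => //; split => //.
by split => //; rewrite -El /gs_last Hu2.
Qed.

Lemma compose_s_correct w : L C w <-> apply_s sp (L B) w.
Proof.
split.
  move=> H; have [C1 _] := sound H.
  have Hr : hat_iota s B w.1 <> Rej.
    move=> E; case/lang_inv: H => [[H _]|[p [q [w' [H _]]]]];
      by move: H; rewrite /= /ciota E.
  have HR := hi_hatR (erefl _) Hr.
  have [_ ns] := hatR_ns HR.
  have Kw := C1 _ ns erefl.
  exact: (proj2 (hatR_K HR (x := w) erefl) Kw).
move=> Kw.
have [r HR] := K_hatR Kw.
have [_ ns] := hatR_ns HR.
apply: (proj1 (complete (ltnSn (size w.2))) r) => //.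
  by rewrite /= /ciota (hatR_hi HR).
exact: (proj1 (hatR_K HR (x := w) erefl) Kw).
Qed.
End Comp.

Section CompT.
Variables (S T0 T1 : finType) (t : T0 -> BA T1) (A : kat_aut S T0).

Lemma tc b a : t_consistent t b a -> t_inv t b = a.
Proof. by move=> H; apply/setP => x; rewrite inE H. Qed.

Lemma ct1 g w : lang_from (compose_t t A) (fun b => g (t_inv t b)) w ->
  exists v, lang_from A g v /\ t_consistent t w.1 v.1 /\ cons_list t w.2 v.2.
Proof.
move Eg: (fun b => g (t_inv t b)) => g' H; elim: H g Eg => {g' w} [g0 b Hb|g0 b p q w' Hb Hw IH] g Eg; subst g0.
  exists (t_inv t b, [::]); split; first exact: LF_acc.
  by split => // x; rewrite inE.
have [v [Hv [Hc Hl]]] := IH (delta A q) erefl.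
exists (t_inv t b, (p, v.1) :: v.2); split; first exact: (LF_act (gamma := g) (a := t_inv t b) Hb Hv).
by split => [x|]; [rewrite inE | split].
Qed.

Lemma ct2 g v : lang_from A g v -> forall w, t_consistent t w.1 v.1 -> cons_list t w.2 v.2 ->
  lang_from (compose_t t A) (fun b => g (t_inv t b)) w.
Proof.
elim=> {g v} [g0 a Hg | g0 a p q v' Hg Hv IH] [b ws] /= Hc Hl.
  case: ws Hl => [_|[]] //; apply: LF_acc; by rewrite (tc Hc).
case: ws Hl => [|[p2 b2] ws'] //= [Ep [Hc2 Hl2]]; subst p2.
apply: (LF_act (A := compose_t t A) (gamma := fun b0 => g0 (t_inv t b0)) (a := b) (p := p) (q := q) (w := (b2, ws'))); first by rewrite /= (tc Hc).
exact: IH.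
Qed.

Lemma compose_t_correct w : L (compose_t t A) w <-> apply_t t (L A) w.
Proof.
split; first by move/ct1 => [v [Hv [Hc Hl]]]; exists v.
by move=> [v [Hv [Hc Hl]]]; apply: (ct2 Hv).
Qed.
End CompT.

Theorem proposition6p5 (S0 S1 T0 T1 : finType) (A : kat_aut S0 T0)
  (s : S0 -> kat_aut S1 T1) (t : T0 -> BA T1) :
  forall w : gstring S1 T1,
    L (compose_st s t A) w <-> apply_st (fun p => L (s p)) t (L A) w.
Proof.
move=> w; rewrite /compose_st compose_s_correct /apply_st /apply_s.
split=> -[v [Hv Hs]]; exists v; split => //; by apply/compose_t_correct.
Qed.
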